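(* Let $M$ and $M'$ be as described in the context, with the same initial-state distribution $\rho$ on $S$ and horizon $T$. For every policy $\pi'=(\pi'_1,\dots,\pi'_n)$ on $M'$, \[ V'_{\pi'}(\rho) = V_{\phi(\pi')}(\rho). \]
   Context: Fix integers $n\ge 1$ (agents/radars), $m\ge 1$ (targets), a horizon $T\ge 1$, and write $[m]=\{1,\dots,m\}$ and $\dagger$ for an extra ''stop'' symbol not in $[m]$. Let $S$ be a finite state space, $\Omega_1,\dots,\Omega_n$ finite individual observation sets, $O(\omega\mid s)$ a probability distribution on $\Omega_1\times\dots\times\Omega_n$ for each $s\in S$, $P(s,\varepsilon,\cdot)$ a probability distribution on $S$ for each $s\in S$ and joint action $\varepsilon=(\varepsilon_1,\dots,\varepsilon_n)\in\mathcal P([m])^n$, and $R:S\times\mathcal P([m])^n\times S\to\mathbb R$ a reward function. The original Dec-POMDP $M$: agent $j$'s action is a subset $\varepsilon_j\subseteq[m]$ (the set of targets it tracks). A policy on $M$ is $\pi=(\pi_1,\dots,\pi_n)$ with each $\pi_j(\cdot\mid\omega_j)$ a probability distribution on $\mathcal P([m])$ for each $\omega_j\in\Omega_j$. Dynamics: $s_0\sim\rho$; at each step $t=0,\dots,T-1$, an observation $\omega_t=(\omega_{t,1},\dots,\omega_{t,n})\sim O(\cdot\mid s_t)$ is drawn, each agent independently draws $\varepsilon_{t,j}\sim\pi_j(\cdot\mid\omega_{t,j})$, then $s_{t+1}\sim P(s_t,\varepsilon_t,\cdot)$ and reward $R(s_t,\varepsilon_t,s_{t+1})$ is received. $V_\pi(\rho)=\mathbb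 E\big[\sum_{t=0}^{T-1}R(s_t,\varepsilon_t,s_{t+1})\big]$. The sequential-choice Dec-POMDP $M'$: its states are pairs $s\otimes\varepsilon$ of an underlying state $s\in S$ and a tuple of partial selections $\varepsilon=(\varepsilon_1,\dots,\varepsilon_n)$, $\varepsilon_j\subseteq[m]$, together with a flag per agent saying whether it has finished. A policy on $M'$ is $\pi'=(\pi'_1,\dots,\pi'_n)$ where, for each $\omega_j\in\Omega_j$ and $E\subseteq[m]$, $\pi'_j(\cdot\mid\omega_j,E)$ is a probability distribution on $([m]\setminus E)\cup\{\dagger\}$. Dynamics: $s_0\sim\rho$; each round $t=0,\dots,T-1$ proceeds as follows. An observation $\omega_t\sim O(\cdot\mid s_t)$ is drawn and stays fixed during the round; all $\varepsilon_j$ start at $\varnothing$ and no agent is finished. At each micro-step, every unfinished agent $j$ independently draws $a_j\sim\pi'_j(\cdot\mid\omega_{t,j},\varepsilon_j)$; if $a_j\in[m]$ then $\varepsilon_j\leftarrow\varepsilon_j\cup\{a_j\}$, and if $a_j=\dagger$ agent $j$ becomes finished; the underlying state does not change and reward $0$ is received. (Since chosen targets cannot be rechosen, each agent finishes after at most $m+1$ micro-steps.) When all agents are finished with selections $\varepsilon=(\varepsilon_1,\dots,\varepsilon_n)$, the underlying state moves to $s_{t+1}\sim P(s_t,\varepsilon,\cdot)$, reward $R(s_t,\varepsilon,s_{t+1})$ is received, and the selections are reset to $\varnothing$. $V'_{\pi'}(\rho)$ is the expected total reward received over the $T$ rounds. Policy transposition: for a policy $\pi'$ on $M'$, $\phi(\pi')$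 is the policy on $M$ with, for each agent $j$, $\omega\in\Omega_j$ and $\varepsilon\subseteq[m]$ with $|\varepsilon|=p$, \[\phi_j(\pi')(\varepsilon\mid\omega)=\sum_{(i_1,\dots,i_p)}\Big(\prod_{l=0}^{p-1}\pi'_j\big(i_{l+1}\mid\omega,\{i_1,\dots,i_l\}\big)\Big)\,\pi'_j(\dagger\mid\omega,\varepsilon),\] where the sum ranges over all $p!$ orderings $(i_1,\dots,i_p)$ of the elements of $\varepsilon$ (for $\varepsilon=\varnothing$ this is $\pi'_j(\dagger\mid\omega,\varnothing)$). *)

(* Defs.v *)
From HB Require Import structures.
From mathcomp Require Import all_boot all_order all_algebra.
Set Implicit Arguments. Unset Strict Implicit. Unset Printing Implicit Defensive.
Import Order.TTheory GRing.Theory Num.Theory.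
Local Open Scope ring_scope.

Definition is_distr (R : realFieldType) (T : finType) (f : T -> R) : Prop :=
  (forall x, 0 <= f x) /\ \sum_(x : T) f x = 1.

Section DecPOMDP.
Variable R : realFieldType.
Variables (n m : nat) (S : finType) (Omega : 'I_n -> finType).

Definition jobs := {dffun forall j : 'I_n, Omega j}.
Definition jact := {ffun 'I_n -> {set 'I_m}}.

Variables (O : S -> jobs -> R) (P : S -> jact -> S -> R) (Rw : S -> jact -> S -> R).

(* pi j w e = pi_j(e | w) *)
Definition policyM := forall j : 'I_n, Omega j -> {set 'I_m} -> R.

Definition joint_act_prob (pi : policyM) (w : jobs) (e : jact) : R :=
  \prod_(j < n) pi j (w j) (e j).

Fixpoint VM_togo (pi : policyM) (t : nat) (s : S) : R :=
  match t with
  | 0 => 0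
  | t'.+1 => \sum_(w : jobs) O s w *
             \sum_(e : jact) joint_act_prob pi w e *
             \sum_(s' : S) P s e s' * (Rw s e s' + VM_togo pi t' s')
  end.

Definition VM (pi : policyM) (T : nat) (rho : S -> R) : R :=
  \sum_(s : S) rho s * VM_togo pi T s.

(* pi' j w E a = pi'_j(a | w, E); a = Some i is target i, a = None is the stop symbol dagger *)
Definition policyM' := forall j : 'I_n, Omega j -> {set 'I_m} -> option 'I_m -> R.

(* per-agent partial selection together with its "finished" flag *)
Definition config := {ffun 'I_n -> {set 'I_m} * bool}.

Definition upd (E : {set 'I_m}) (a : option 'I_m) : {set 'I_m} * bool :=
  match a with Some i => (i |: E, false) | None => (E, true) end.

Definition agent_step (pi' : policyM') (j : 'I_n) (wj : Omega j)
    (c c' : {set 'I_m} * bool) : R :=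
  if c.2 then (c' == c)%:R
  else \sum_(a : option 'I_m) pi' j wj c.1 a * (c' == upd c.1 a)%:R.

Definition micro_step (pi' : policyM') (w : jobs) (c c' : config) : R :=
  \prod_(j < n) agent_step pi' (w j) (c j) (c' j).

Definition all_fin (c : config) : bool := [forall j, (c j).2].
Definition sel (c : config) : jact := [ffun j => (c j).1].
Definition init_cfg : config := [ffun _ => (set0, false)].

(* Expected value of the rest of a round (observation w fixed), starting from
   configuration c, with k micro-steps of fuel (m+1 always suffice); once all
   agents are finished with selections e, the value [cont e] is collected. *)
Fixpoint round_value (pi' : policyM') (cont : jact -> R) (w : jobs)
    (k : nat) (c : config) : R :=
  if all_fin c then cont (sel c)
  else match k with
       | 0 => 0
       | k'.+1 => \sum_(c' : config) micro_step pi' w c c' * round_value pi' cont w k' c'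
       end.

Fixpoint VM'_togo (pi' : policyM') (t : nat) (s : S) : R :=
  match t with
  | 0 => 0
  | t'.+1 => \sum_(w : jobs) O s w *
             round_value pi'
               (fun e => \sum_(s' : S) P s e s' * (Rw s e s' + VM'_togo pi' t' s'))
               w m.+1 init_cfg
  end.

Definition VM' (pi' : policyM') (T : nat) (rho : S -> R) : R :=
  \sum_(s : S) rho s * VM'_togo pi' T s.

Fixpoint ord_prob (pi' : policyM') (j : 'I_n) (wj : Omega j)
    (pre : {set 'I_m}) (s : seq 'I_m) : R :=
  match s with
  | [::] => 1
  | i :: s' => pi' j wj pre (Some i) * ord_prob pi' wj (i |: pre) s'
  end.

Definition phi (pi' : policyM') : policyM :=
  fun j wj e =>
    (\sum_(s <- permutations (enum e)) ord_prob pi' wj set0 s) * pi' j wj e None.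

Definition is_policyM' (pi' : policyM') : Prop :=
  forall (j : 'I_n) (wj : Omega j) (E : {set 'I_m}),
    is_distr (pi' j wj E) /\ (forall i, i \in E -> pi' j wj E (Some i) = 0).

End DecPOMDP.

(* Main.v *)
Require Import Defs.
From mathcomp Require Import all_boot all_order all_algebra zify.
Import Order.TTheory GRing.Theory Num.Theory.
Local Open Scope ring_scope.
Lemma sum_option (R : nmodType) (T : finType) (F : option T -> R) :
  \sum_(a : option T) F a = F None + \sum_(i : T) F (Some i).
Proof.
transitivity (\sum_(a <- None :: map Some (index_enum T)) F a); last first.
  by rewrite big_cons big_map.
apply: perm_big.
apply: uniq_perm.
- exact: index_enum_uniq.
- rewrite /= map_inj_uniq ?index_enum_uniq; last by move=> x y [].
  by rewrite andbT; apply/mapP => -[x].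
- case=> [x|]; rewrite !mem_index_enum ?inE //=.
  by rewrite (mem_map (@Some_inj _)) mem_index_enum.
Qed.

Section Proof.
Variables (R : realFieldType) (n m : nat) (Omega : 'I_n -> finType)
  (pi' : policyM' R m Omega).

Fixpoint hh (j : 'I_n) (wj : Omega j) (k : nat) (c : {set 'I_m} * bool)
  (e : {set 'I_m}) : R :=
  if c.2 then (c.1 == e)%:R
  else match k with
       | 0 => 0
       | k'.+1 => \sum_(x : {set 'I_m} * bool) agent_step pi' wj c x * hh j wj k' x e
       end.
Arguments hh [j] wj k c e.

Lemma hh_fin j (wj : Omega j) k E e : hh wj k (E, true) e = (E == e)%:R.
Proof. by case: k. Qed.

Lemma hh_step j (wj : Omega j) k c e :
  hh wj k.+1 c e = \sum_x agent_step pi' wj c x * hh wj k x e.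
Proof.
case: c => E [] //=.
rewrite /agent_step /= (bigD1 (E, true)) //= eqxx mul1r hh_fin big1 ?addr0 //.
by move=> x /negbTE ->; rewrite mul0r.
Qed.

Lemma rv_fin (cont : jact n m -> R) (w : jobs Omega) k (c : config n m) :
  all_fin c -> round_value pi' cont w k c = cont (sel c).
Proof. by case: k => [|k] /= ->. Qed.

Lemma rv_0 (cont : jact n m -> R) (w : jobs Omega) (c : config n m) :
  ~~ all_fin c -> round_value pi' cont w 0 c = 0.
Proof. by move=> /= /negbTE ->. Qed.

Lemma rv_S (cont : jact n m -> R) (w : jobs Omega) k (c : config n m) :
  ~~ all_fin c -> round_value pi' cont w k.+1 c =
  \sum_(c' : config n m) micro_step pi' w c c' * round_value pi' cont w k c'.
Proof. by move=> /= /negbTE ->. Qed.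

Lemma fin_case (cont : jact n m -> R) (w : jobs Omega) k (c : config n m) :
  all_fin c ->
  \sum_(e : jact n m) (\prod_(j < n) hh (w j) k (c j) (e j)) * cont e = cont (sel c).
Proof.
move=> /forallP Hf.
rewrite (bigD1 (sel c)) //= [X in _ + X]big1; last first.
  move=> e Hne.
  case: (pickP (fun j => sel c j != e j)) => [j Hj|Hall]; last first.
    exfalso; move/eqP: Hne; apply; apply/ffunP => j.
    by apply/eqP; rewrite eq_sym; exact: negbFE (Hall j).
  rewrite (bigD1 j) //=.
  move: Hj (Hf j); rewrite ffunE; case: (c j) => E b /= Hj ->.
  by rewrite hh_fin (negbTE Hj) !mul0r.
rewrite addr0 big1 ?mul1r // => j _.
  have := Hf j; rewrite ffunE; case: (c j) => E b /= ->.
by rewrite hh_fin eqxx.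
Qed.

Lemma round_eq (cont : jact n m -> R) (w : jobs Omega) k (c : config n m) :
  round_value pi' cont w k c =
  \sum_(e : jact n m) (\prod_(j < n) hh (w j) k (c j) (e j)) * cont e.
Proof.
have [Hfin|Hfin] := boolP (all_fin c).
  by rewrite rv_fin // fin_case.
elim: k c Hfin => [|k IH] c Hfin.
  rewrite rv_0 //.
  move/forallPn: Hfin => [j Hj].
  rewrite big1 // => e _.
  move: Hj; case Hcj: (c j) => [E []] // _.
  by rewrite (bigD1 j) //= Hcj /= !mul0r.
rewrite rv_S //.
transitivity (\sum_(c' : config n m) micro_step pi' w c c' *
   \sum_(e : jact n m) (\prod_(j < n) hh (w j) k (c' j) (e j)) * cont e).
  apply: eq_bigr => c' _; congr (_ * _).
  have [Hf'|Hf'] := boolP (all_fin c'); first by rewrite rv_fin // fin_case.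
  exact: IH.
under [RHS]eq_bigr do under eq_bigr do rewrite hh_step.
under [RHS]eq_bigr do rewrite bigA_distr_bigA mulr_suml.
rewrite [RHS]exchange_big /=; apply: eq_bigr => c' _.
rewrite mulr_sumr; apply: eq_bigr => e _.
by rewrite /micro_step mulrA -big_split.
Qed.

Definition G j (wj : Omega j) (E D : {set 'I_m}) : R :=
  \sum_(t <- permutations (enum D)) ord_prob pi' wj E t.
Arguments G [j] wj E D.

Lemma G0 j (wj : Omega j) E : G wj E set0 = 1.
Proof. by rewrite /G enum_set0 /= big_seq1. Qed.

Lemma G_rec j (wj : Omega j) E D : D != set0 ->
  G wj E D = \sum_(i in D) pi' j wj E (Some i) * G wj (i |: E) (D :\ i).
Proof.
move=> HD.
have Hs : (0 < size (enum D))%N.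
  rewrite lt0n size_eq0; apply: contra HD => /eqP HD0.
  by apply/eqP/setP => x; rewrite in_set0 -mem_enum HD0.
rewrite /G (perm_big _ (permutationsE Hs)) big_allpairs_dep undup_id ?enum_uniq //.
rewrite big_enum /=; apply: eq_bigr => i Hi.
rewrite /= mulr_sumr; apply: perm_big; apply: perm_permutations.
apply: uniq_perm; first by rewrite rem_uniq ?enum_uniq.
  exact: enum_uniq.
move=> x; rewrite mem_rem_uniq ?enum_uniq // !inE !mem_enum.
by rewrite in_setD1.
Qed.

Lemma agent_val j (wj : Omega j) k E e :
  (forall (F : {set 'I_m}) i, i \in F -> pi' j wj F (Some i) = 0) ->
  (#|~: E| < k)%N ->
  hh wj k (E, false) e = (E \subset e)%:R * G wj E (e :\: E) * pi' j wj e None.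
Proof.
move=> Hpol; elim: k E => [|k IH] E Hk; first by [].
rewrite hh_step.
have -> : \sum_x agent_step pi' wj (E, false) x * hh wj k x e =
          \sum_(a : option 'I_m) pi' j wj E a * hh wj k (upd E a) e.
  rewrite /agent_step /=.
  under eq_bigr do rewrite mulr_suml.
  rewrite exchange_big /=; apply: eq_bigr => a _.
  rewrite (bigD1 (upd E a)) //= eqxx mulr1 big1 ?addr0 // => x /negbTE ->.
  by rewrite mulr0 mul0r.
rewrite sum_option /= hh_fin.
have Hsum : \sum_(i : 'I_m) pi' j wj E (Some i) * hh wj k (i |: E, false) e =
   \sum_(i in e :\: E) pi' j wj E (Some i) *
      ((i |: E \subset e)%:R * G wj (i |: E) (e :\: (i |: E)) * pi' j wj e None).
  rewrite [RHS]big_mkcond; apply: eq_bigr => i _.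
  have [HiE|HiE] := boolP (i \in E).
    by rewrite in_setD HiE /= Hpol // mul0r.
  rewrite IH; last first.
    have h1 := cardsC (i |: E); have h2 := cardsC E.
    rewrite cardsU1 HiE /= in h1.
move: h1 h2 Hk; rewrite ?card_ord; set a := #|~: (i |: E)|; set b := #|~: E|; set c := #|E|. Show. lia.
  rewrite in_setD HiE /=; case: ifP => // Hie.
  by rewrite subUset sub1set Hie /= !mul0r mulr0.
rewrite Hsum.
have [HEe|HEe] := boolP (E \subset e); last first.
  rewrite !mul0r big1 ?addr0; last first.
    by move=> i _; rewrite subUset (negbTE HEe) andbF !mul0r mulr0.
  case: eqP => [HE|]; last by rewrite mulr0.
  by move: HEe; rewrite HE subxx.
case: eqP => [<-|HEne].
  by rewrite setDv big_set0 G0 addr0 !mulr1 mul1r.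
rewrite mulr0 add0r mul1r G_rec; last first.
  rewrite setD_eq0; apply/negP => HeE; apply: HEne.
  by apply/eqP; rewrite eqEsubset HEe HeE.
rewrite mulr_suml; apply: eq_bigr => i.
rewrite in_setD => /andP [HiE Hie].
rewrite subUset sub1set Hie HEe /= mul1r mulrA.
by congr (_ * G _ _ _ * _); rewrite setDDl setUC.
Qed.
End Proof.

Theorem lemma1 (R : realFieldType) (n m T : nat) (S : finType)
    (Omega : 'I_n -> finType)
    (O : S -> jobs Omega -> R) (P : S -> jact n m -> S -> R)
    (Rw : S -> jact n m -> S -> R) (rho : S -> R)
    (pi' : policyM' R m Omega) :
  (1 <= n)%N -> (1 <= m)%N -> (1 <= T)%N ->
  is_distr rho ->
  (forall s, is_distr (O s)) ->
  (forall s e, is_distr (P s e)) ->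
  is_policyM' pi' ->
  VM' O P Rw pi' T rho = VM O P Rw (phi pi') T rho.
Proof.
move=> _ _ _ _ _ _ Hpol.
have Hround : forall (w : jobs Omega) (cont : jact n m -> R),
    round_value pi' cont w m.+1 (init_cfg n m) =
    \sum_(e : jact n m) joint_act_prob (phi pi') w e * cont e.
  move=> w cont; rewrite round_eq; apply: eq_bigr => e _; congr (_ * _).
  rewrite /joint_act_prob; apply: eq_bigr => j _.
  rewrite ffunE agent_val.
  - by rewrite sub0set setD0 mul1r /phi /G.
  - by move=> F i Hi; exact: (proj2 (Hpol j (w j) F) i Hi).
  - by rewrite setC0 cardsT card_ord.
rewrite /VM' /VM; apply: eq_bigr => s _; congr (_ * _).
elim: T s => [|t IH] s; first by [].
transitivity (\sum_(w : jobs Omega) O s w *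
   round_value pi' (fun e => \sum_(s' : S) P s e s' * (Rw s e s' + VM'_togo O P Rw pi' t s'))
   w m.+1 (init_cfg n m)); first by [].
rewrite [RHS]/=; apply: eq_bigr => w _; congr (_ * _).
rewrite Hround; apply: eq_bigr => e _; congr (_ * _).
by apply: eq_bigr => s' _; rewrite IH.
Qed.
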